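(* Let $Z\in\mathbb{R}^{m\times n}$ and $\lambda\ge 0$, and let $\breve{k}$ be the number of singular values of $Z$ that are strictly larger than $\lambda$. Let $k\ge \breve{k}$ and let $Q\in\mathbb{R}^{m\times k}$ have orthonormal columns ($Q^\top Q=I$) such that the column span of $Q$ contains the subspace spanned by the top $\breve{k}$ left singular vectors of $Z$ (those associated with the singular values larger than $\lambda$). Then $\mathrm{SVT}_\lambda(Z)=Q\,\mathrm{SVT}_\lambda(Q^\top Z)$.
   Context: For a matrix $A$ with singular value decomposition $A=U\Sigma V^\top$ and $\lambda\ge 0$, the singular value thresholding operator is $\mathrm{SVT}_\lambda(A)=U(\Sigma-\lambda I)_+V^\top$, where $(\cdot)_+$ takes the entrywise maximum with $0$; equivalently $\mathrm{SVT}_\lambda(A)=\arg\min_X \frac12\|X-A\|_F^2+\lambda\|X\|_*$, with $\|\cdot\|_*$ the nuclear norm (sum of singular values). *)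

(* Defs.v *)
From mathcomp Require Import all_boot all_order all_algebra.
Set Implicit Arguments. Unset Strict Implicit. Unset Printing Implicit Defensive.
Import Order.TTheory GRing.Theory Num.Theory.
Local Open Scope ring_scope.

Definition is_svd (R : rcfType) (m n r : nat) (A : 'M[R]_(m, n))
    (U : 'M[R]_(m, r)) (s : 'rV[R]_r) (V : 'M[R]_(n, r)) : Prop :=
  [/\ U^T *m U = 1%:M, V^T *m V = 1%:M, (forall i, 0 <= s 0 i)
    & A = U *m diag_mx s *m V^T].

Definition svt_of (R : rcfType) (m n r : nat) (lam : R)
    (U : 'M[R]_(m, r)) (s : 'rV[R]_r) (V : 'M[R]_(n, r)) : 'M[R]_(m, n) :=
  U *m diag_mx (\row_i Num.max (s 0 i - lam) 0) *m V^T.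

(* Main.v *)
Require Import Defs.
From mathcomp Require Import all_boot all_order all_algebra.
Import Order.TTheory GRing.Theory Num.Theory.
Local Open Scope ring_scope.

Lemma gram_ge0 (R : rcfType) m p (X : 'M[R]_(m, p)) j : 0 <= (X^T *m X) j j.
Proof. rewrite mxE; apply: sumr_ge0 => i _; rewrite mxE -expr2; exact: sqr_ge0. Qed.

Lemma gram_eq0 (R : rcfType) m p (X : 'M[R]_(m, p)) j :
  (X^T *m X) j j = 0 -> forall i, X i j = 0.
Proof.
rewrite mxE => H i.
have H0 : forall i0 : 'I_m, predT i0 -> 0 <= X^T j i0 * X i0 j.
  by move=> i0 _; rewrite mxE -expr2; exact: sqr_ge0.
have := (@psumr_eq0P R _ predT (fun i => X^T j i * X i j) H0 H i isT).
rewrite mxE => /eqP; rewrite mulf_eq0 orbb; exact: eqP.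
Qed.

Lemma trB (R : rcfType) m n (A B : 'M[R]_(m, n)) : (A - B)^T = A^T - B^T.
Proof. by apply/matrixP => i j; rewrite !mxE. Qed.

Lemma bessel (R : rcfType) m k p (W : 'M[R]_(m, k)) (C : 'M[R]_(m, p)) j :
  W^T *m W = 1%:M -> ((W^T *m C)^T *m (W^T *m C)) j j <= (C^T *m C) j j.
Proof.
move=> WW.
have E : C^T *m C - (W^T *m C)^T *m (W^T *m C)
   = (C - W *m (W^T *m C))^T *m (C - W *m (W^T *m C)).
  rewrite trB !trmx_mul !trmxK !mulmxBl !mulmxBr.
  have -> : C^T *m W *m W^T *m (W *m (W^T *m C)) = C^T *m W *m (W^T *m C).
    by rewrite !mulmxA -[C^T *m W *m W^T *m W]mulmxA WW mulmx1.
  rewrite !mulmxA opprB addrA subrK; done.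
rewrite -subr_ge0.
have -> : (C^T *m C) j j - ((W^T *m C)^T *m (W^T *m C)) j j
   = (C^T *m C - (W^T *m C)^T *m (W^T *m C)) j j by rewrite !mxE.
rewrite E; exact: gram_ge0.
Qed.

Theorem proposition4 (R : rcfType) (m n r k : nat) (Z : 'M[R]_(m, n)) (lam : R)
    (U : 'M[R]_(m, r)) (s : 'rV[R]_r) (V : 'M[R]_(n, r))
    (Q : 'M[R]_(m, k)) :
  0 <= lam ->
  is_svd Z U s V ->
  leq #|[set i : 'I_r | lam < s 0 i]| k ->
  Q^T *m Q = 1%:M ->
  (forall i : 'I_r, lam < s 0 i -> ((col i U)^T <= Q^T)%MS) ->
  forall (r' : nat) (U' : 'M[R]_(k, r')) (s' : 'rV[R]_r') (V' : 'M[R]_(n, r')),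
    is_svd (Q^T *m Z) U' s' V' ->
    svt_of lam U s V = Q *m svt_of lam U' s' V'.
Proof.
move=> lam0 [UU VV s0 ZE] _ QQ Hsub r' U' s' V' [UU' VV' s0' AE].
rewrite /svt_of.
set A := Q^T *m Z in AE *.
set S := diag_mx s in ZE *.
set S' := diag_mx s' in AE *.
pose Db := diag_mx (\row_i (if lam < s 0 i then 1 else 0) : 'rV[R]_r).
pose E' := diag_mx (\row_i (if lam < s' 0 i then 1 else 0) : 'rV[R]_r').
pose H := diag_mx (\row_i (if lam < s 0 i then (s 0 i - lam) / s 0 i else 0) : 'rV[R]_r).
pose H' := diag_mx (\row_i (if lam < s' 0 i then (s' 0 i - lam) / s' 0 i else 0) : 'rV[R]_r').
pose K := diag_mx (\row_i (if lam < s 0 i then (s 0 i ^+ 2)^-1 else 0) : 'rV[R]_r).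
set F := diag_mx (\row_i Num.max (s 0 i - lam) 0).
set F' := diag_mx (\row_i Num.max (s' 0 i - lam) 0).
have d1 : Db *m Db = Db.
  rewrite mulmx_diag; congr diag_mx; apply/rowP => i; rewrite !mxE.
  by case: ifP; rewrite ?mulr1 ?mulr0.
have d2 : Db *m S = S *m Db by apply: diag_mxC.
have d3 : S *m H *m Db = F.
  rewrite !mulmx_diag; congr diag_mx; apply/rowP => i; rewrite !mxE.
  case: ifP => h; last first.
    by rewrite !mulr0; apply/esym/max_idPr; rewrite subr_le0 leNgt h.
  have sp : 0 < s 0 i by apply: le_lt_trans h.
  rewrite mulr1 mulrCA divff ?gt_eqF // mulr1.
  by apply/esym/max_idPl; rewrite subr_ge0 ltW.
have d4 : S' *m H' = F'.
  rewrite !mulmx_diag; congr diag_mx; apply/rowP => i; rewrite !mxE.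
  case: ifP => h; last first.
    by rewrite !mulr0; apply/esym/max_idPr; rewrite subr_le0 leNgt h.
  have sp : 0 < s' 0 i by apply: le_lt_trans h.
  rewrite mulrCA divff ?gt_eqF // mulr1.
  by apply/esym/max_idPl; rewrite subr_ge0 ltW.
have d5 : E' *m H' = H'.
  rewrite mulmx_diag; congr diag_mx; apply/rowP => i; rewrite !mxE.
  by case: ifP; rewrite ?mul1r ?mul0r.
have d6 : K *m Db *m S *m S = Db.
  rewrite !mulmx_diag; congr diag_mx; apply/rowP => i; rewrite !mxE.
  case: ifP => h; rewrite ?mul0r //.
  have sp : 0 < s 0 i by apply: le_lt_trans h.
  by rewrite mulr1 -mulrA -expr2 mulVf // expf_neq0 // gt_eqF.
have d7 : E' *m E' = E'.
  rewrite mulmx_diag; congr diag_mx; apply/rowP => i; rewrite !mxE.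
  by case: ifP; rewrite ?mulr1 ?mulr0.
have E1 : Z *m V = U *m S by rewrite ZE -mulmxA VV mulmx1.
have ZT : Z^T = V *m S *m U^T by rewrite ZE !trmx_mul trmxK tr_diag_mx mulmxA.
have E2 : Z^T *m U = V *m S by rewrite ZT -mulmxA UU mulmx1.
have E3 : A *m V' = U' *m S' by rewrite AE -mulmxA VV' mulmx1.
have PT : (Q *m Q^T)^T = Q *m Q^T by rewrite trmx_mul trmxK.
have E4 : Z^T *m Q *m Q^T *m Z = V' *m (S' *m S') *m V'^T.
  have -> : Z^T *m Q *m Q^T *m Z = A^T *m A by rewrite /A trmx_mul trmxK !mulmxA.
  rewrite AE !trmx_mul trmxK tr_diag_mx !mulmxA -[V' *m S' *m U'^T *m U']mulmxA UU' mulmx1.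
  by rewrite -!mulmxA.
have E5 : Q *m Q^T *m U *m Db = U *m Db.
  apply/matrixP => a i; rewrite !mul_mx_diag !mxE.
  case: ifP => h; last by rewrite !mulr0.
  congr (_ * _).
  have [D HD] := submxP (Hsub i h).
  have HC : col i U = Q *m D^T by rewrite -[col i U]trmxK HD trmx_mul trmxK.
  have PC : Q *m Q^T *m col i U = col i U by rewrite HC -mulmxA [Q^T *m _]mulmxA QQ mul1mx.
  move/matrixP: PC => /(_ a 0); rewrite !mxE => <-.
  by apply: eq_bigr => b _; rewrite !mxE.
have E6 : Z^T *m Q *m Q^T *m Z *m V *m Db = V *m Db *m (S *m S).
  rewrite -!mulmxA (mulmxA Z) E1 -mulmxA -d2 !mulmxA.
  have E5' : forall p (X : 'M_(p, m)), X *m Q *m Q^T *m U *m Db = X *m U *m Db.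
    by move=> p X; rewrite -(mulmxA X U) -E5 !mulmxA.
  rewrite E5' E2 -!mulmxA; congr (_ *m _); rewrite !mulmxA d2 //.
have DbT : Db^T = Db by exact: tr_diag_mx.
have ST : S^T = S by exact: tr_diag_mx.
have E7 : Db *m V^T *m (Z^T *m Q *m Q^T *m Z) = S *m S *m Db *m V^T.
  apply: trmx_inj; rewrite !trmx_mul !trmxK DbT ST !mulmxA.
  by move: E6; rewrite !mulmxA.
have D : Db *m (V^T *m V') *m (S' *m S') = S *m S *m Db *m (V^T *m V').
  have h := congr1 (fun M => M *m V') E7; simpl in h.
  rewrite E4 -!mulmxA VV' mulmx1 in h.
  by move: h; rewrite !mulmxA.
have d8 : K *m S *m S *m Db = Db.
  rewrite !mulmx_diag; congr diag_mx; apply/rowP => i; rewrite !mxE.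
  case: ifP => h; rewrite ?mul0r //.
  have sp : 0 < s 0 i by apply: le_lt_trans h.
  by rewrite mulr1 -mulrA -expr2 mulVf // expf_neq0 // gt_eqF.
have F1 : Db *m V^T *m V' *m V'^T = Db *m V^T.
  have h1 : Db *m V^T = K *m (S *m S *m Db *m V^T) by rewrite !mulmxA d8.
  rewrite -E7 E4 in h1.
  rewrite {1}h1 -!mulmxA (mulmxA V'^T V') VV' mul1mx h1 !mulmxA //.
have EE : Db *m (V^T *m V') *m H' = H *m (Db *m (V^T *m V')).
  have D' : Db *m (V^T *m V') *m (S' *m S') = S *m S *m (Db *m (V^T *m V')).
    by rewrite D !mulmxA.
  move: D'; move: (Db *m (V^T *m V')) => N D2.
  rewrite !mulmx_diag in D2.
  apply/matrixP => i j; rewrite mul_mx_diag mul_diag_mx !mxE.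
  move/matrixP: D2 => /(_ i j); rewrite mul_mx_diag mul_diag_mx !mxE => Dij.
  have [->|Nn0] := eqVneq (N i j) 0; first by rewrite mulr0 mul0r.
  have ss : s' 0 j = s 0 i.
    have : (s' 0 j * s' 0 j - s 0 i * s 0 i) * N i j = 0.
      by rewrite mulrBl [X in X - _]mulrC Dij subrr.
    move/eqP; rewrite mulf_eq0 (negPf Nn0) orbF subr_eq0 -!expr2.
    by rewrite eqrXn2 // => /eqP.
  by rewrite ss mulrC.
have C : V *m Db *m V^T *m (V' *m E') = V' *m E'.
  pose Y := V' *m E'.
  pose B := Y - V *m Db *m V^T *m Y.
  suff B0 : B = 0 by move/eqP: B0; rewrite subr_eq0 => /eqP h; rewrite -h.
  pose G := Z^T *m Q *m Q^T *m Z.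
  have SE : S' *m S' *m E' = E' *m (S' *m S').
    by rewrite !mulmx_diag; congr diag_mx; apply/rowP => i; rewrite !mxE mulrC.
  have c1 : G *m Y = Y *m (S' *m S').
    rewrite /G E4 /Y -!mulmxA (mulmxA V'^T V') VV' mul1mx !mulmxA.
    have SE' : forall p (X : 'M_(p, r')), X *m S' *m S' *m E' = X *m E' *m S' *m S'.
      by move=> p X; rewrite -(mulmxA X S') -(mulmxA X) SE !mulmxA.
    exact: SE'.
  have E6' : G *m (V *m Db) = V *m Db *m (S *m S) by rewrite /G mulmxA E6.
  have BT : B^T = Y^T - Y^T *m V *m Db *m V^T.
    by rewrite /B trB !trmx_mul !trmxK DbT !mulmxA.
  have c3 : B^T *m V *m Db = 0.
    rewrite BT mulmxBl mulmxBl -[_ *m V^T *m V]mulmxA VV mulmx1.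
    by rewrite -[_ *m Db *m Db]mulmxA d1 subrr.
  have GT : G^T = G by rewrite /G !trmx_mul !trmxK !mulmxA.
  have c4 : B^T *m G *m B = B^T *m B *m (S' *m S').
    have GB : G *m B = Y *m (S' *m S') - V *m Db *m (S *m S) *m V^T *m Y.
      rewrite /B mulmxBr c1 !mulmxA; congr (_ - _).
      by rewrite -[G *m V *m Db]mulmxA E6' !mulmxA.
    rewrite -mulmxA GB mulmxBr.
    have -> : B^T *m (V *m Db *m (S *m S) *m V^T *m Y) = 0.
      by rewrite !mulmxA c3 !mul0mx.
    rewrite subr0 mulmxA.
    have BY : B^T *m B = B^T *m Y.
      have -> : B^T *m B = B^T *m (Y - V *m Db *m V^T *m Y) by [].
      by rewrite mulmxBr !mulmxA c3 !mul0mx subr0.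
    by rewrite BY !mulmxA.
  have BE : B *m E' = B.
    by rewrite /B mulmxBl /Y -!mulmxA d7.
  have nrm : forall j, (B^T *m G *m B) j j <= lam ^+ 2 * (B^T *m B) j j.
    move=> j.
    have GB : B^T *m G *m B = (Q^T *m (Z *m B))^T *m (Q^T *m (Z *m B)).
      by rewrite /G !trmx_mul !trmxK !mulmxA.
    rewrite GB; apply: le_trans (@bessel _ _ _ _ Q (Z *m B) j QQ) _.
    have ZB : (Z *m B)^T *m (Z *m B) = (V^T *m B)^T *m (S *m S) *m (V^T *m B).
      by rewrite ZE !trmx_mul !trmxK ST !mulmxA -[_ *m U^T *m U]mulmxA UU mulmx1.
    rewrite ZB.
    have Dbc : Db *m (V^T *m B) = 0.
      by apply: trmx_inj; rewrite !trmx_mul trmxK DbT trmx0 c3.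
    have bV : lam ^+ 2 * ((V^T *m B)^T *m (V^T *m B)) j j <= lam ^+ 2 * (B^T *m B) j j.
      by apply: ler_wpM2l; [exact: sqr_ge0 | exact: (@bessel _ _ _ _ V B j VV)].
    apply: le_trans bV.
    move: Dbc; move: (V^T *m B) => c Dbc.
    rewrite mulmx_diag -mulmxA mul_diag_mx !mxE mulr_sumr; apply: ler_sum => i _.
    rewrite !mxE.
    move/matrixP: Dbc => /(_ i j); rewrite mul_diag_mx !mxE.
    case: ifP => h.
      by rewrite mul1r => ->; rewrite !(mul0r, mulr0).
    move=> _; rewrite mulrCA; apply: ler_wpM2r; first by rewrite -expr2 sqr_ge0.
    have hle : s 0 i <= lam by rewrite leNgt h.
    by rewrite expr2; apply: ler_pM.
  apply/matrixP => a j; rewrite [RHS]mxE.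
  case h: (lam < s' 0 j); last first.
    by rewrite -BE mul_mx_diag !mxE h mulr0.
  have q := nrm j; have e : (B^T *m B *m (S' *m S')) j j = (B^T *m B) j j * (s' 0 j ^+ 2).
    by rewrite mulmx_diag mul_mx_diag !mxE expr2.
  rewrite c4 e in q.
  have sp : 0 < s' 0 j ^+ 2 - lam ^+ 2.
    rewrite subr_gt0 ltr_pXn2r //; apply/(le_trans lam0)/ltW => //.
  have q2 : (B^T *m B) j j * (s' 0 j ^+ 2 - lam ^+ 2) <= 0.
    by rewrite mulrBr subr_le0 [X in _ <= X]mulrC.
  rewrite pmulr_lle0 // in q2.
  have z : (B^T *m B) j j = 0 by apply/le_anti; rewrite q2 gram_ge0.
  exact: gram_eq0 z a.
have E3' : Q *m U' *m S' = Q *m Q^T *m Z *m V' by rewrite -mulmxA -E3 /A !mulmxA.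
rewrite -d4 -d3.
have EE' : forall p (X : 'M_(p, r)), X *m Db *m V^T *m V' *m H' = X *m H *m Db *m V^T *m V'.
  by move=> p X; rewrite -!mulmxA; move: EE; rewrite -!mulmxA => ->.
have F1' : forall p (X : 'M_(p, r)), X *m Db *m V^T *m V' *m V'^T = X *m Db *m V^T.
  by move=> p X; rewrite -!mulmxA; move: F1; rewrite -!mulmxA => ->.
have R1 : Q *m (U' *m (S' *m H') *m V'^T) = Q *m Q^T *m Z *m V' *m E' *m H' *m V'^T.
  by rewrite !mulmxA E3' -[_ *m E' *m H']mulmxA d5.
have R2 : Q *m Q^T *m Z *m V' *m E' *m H' *m V'^T
   = Q *m Q^T *m Z *m (V *m Db *m V^T *m (V' *m E')) *m H' *m V'^T.
  by rewrite C !mulmxA.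
rewrite R1 R2 !mulmxA -[_ *m E' *m H']mulmxA d5.
rewrite -[Q *m Q^T *m Z *m V]mulmxA E1 [Q *m Q^T *m (U *m S)]mulmxA.
rewrite -[_ *m S *m Db]mulmxA -d2 mulmxA E5 -[U *m Db *m S]mulmxA d2 mulmxA.
by rewrite EE' F1'.
Qed.
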